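(* Let $(M,\Delta,S,\varepsilon)$ be a weak Kac algebra with target Cartan subalgebra $N_t$. For $x\in N_t$ let $L_x:N_t\to N_t$ be the linear operator $L_x(n)=xn$. Then $\varepsilon(x)=\mathrm{Tr}\,L_x$ for all $x\in N_t$, where $\mathrm{Tr}$ is the usual trace of a linear operator on the finite-dimensional space $N_t$.
   Context: All algebras are finite-dimensional over $\mathbb{C}$; $\varsigma$ denotes the flip and $\mu(x\otimes y)=xy$. A weak Kac algebra is a quadruple $(M,\Delta,S,\varepsilon)$ where $M$ is a finite-dimensional $C^*$-algebra; $\Delta:M\to M\otimes M$ is an injective, not necessarily unital, $*$-homomorphism with $(\Delta\otimes\mathrm{id})\Delta=(\mathrm{id}\otimes\Delta)\Delta$; $S:M\to M$ is a linear, unital, antimultiplicative, $*$-preserving bijection with $S^2=\mathrm{id}$ and $(S\otimes S)\circ\Delta=\varsigma\circ\Delta\circ S$; and $\varepsilon:M\to\mathbb{C}$ is linear with $(\varepsilon\otimes\mathrm{id})\Delta=(\mathrm{id}\otimes\varepsilon)\Delta=\mathrm{id}$, $\varepsilon\circ S=\varepsilon$, $\varepsilon(x^* )=\overline{\varepsilon(x)}$, $(\varepsilon\otimes\varepsilon)((x\otimes1)e(1\otimes y))=\varepsilon(xy)$ for all $x,y$, where $e:=\Delta(1)$, and $(\varepsilon_s\otimes\mathrm{id})\Delta(x)=(1\otimes x)e$ for all $x$, where $\varepsilon_s:=\mu(S\otimes\mathrm{id})\Delta$. The target Cartan subalgebra is $N_t=\{x\in M:\Delta(x)=e(x\otimes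 1)=(x\otimes1)e\}$. *)

(* Defs.v *)
(* Weak Kac algebras realized concretely:
   - the field C of complex numbers is Stdlib's R adjoined i (complex R, R an rcf);
   - a finite-dimensional C*-algebra M is a unital *-subalgebra of 'M[C]_n
     (every finite-dimensional C*-algebra has a faithful unital *-representation);
   - M (x) M is realized as the span of the Kronecker products a *t b (a, b in M)
     inside 'M[C]_(n*n); products in M (x) M are matrix products;
   - linear maps f (x) g, the flip, mu, eps (x) id, ... are defined on
     'M_n (x) 'M_n = 'M_(n*n) via matrix units. *)
From HB Require Import structures.
From mathcomp Require Import all_boot all_order all_algebra.
From mathcomp Require Import Rstruct.
From mathcomp Require Export complex mxtens.
Set Implicit Arguments. Unset Strict Implicit. Unset Printing Implicit Defensive.
Import GRing.Theory Num.Theory.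
Local Open Scope ring_scope.

Definition Cx : numClosedFieldType := (Rdefinitions.R)[i].

Definition adj {m p : nat} (A : 'M[Cx]_(m, p)) : 'M[Cx]_(p, m) :=
  (map_mx Num.conj A)^T.

(* coefficient of E_ij (x) E_kl in X : 'M_n (x) 'M_n = 'M_(n*n) *)
Definition tcoef {n : nat} (X : 'M[Cx]_(n * n)) (i j k l : 'I_n) : Cx :=
  X (mxtens_index (i, k)) (mxtens_index (j, l)).

Definition tensmap {n p q : nat} (f : 'M[Cx]_n -> 'M[Cx]_p)
  (g : 'M[Cx]_n -> 'M[Cx]_q) (X : 'M[Cx]_(n * n)) : 'M[Cx]_(p * q) :=
  \sum_(i < n) \sum_(j < n) \sum_(k < n) \sum_(l < n)
    tcoef X i j k l *: (f (delta_mx i j) *t g (delta_mx k l)).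

Definition flip {n : nat} (X : 'M[Cx]_(n * n)) : 'M[Cx]_(n * n) :=
  \sum_(i < n) \sum_(j < n) \sum_(k < n) \sum_(l < n)
    tcoef X i j k l *: (delta_mx k l *t delta_mx i j).

Definition mult {n : nat} (X : 'M[Cx]_(n * n)) : 'M[Cx]_n :=
  \sum_(i < n) \sum_(j < n) \sum_(k < n) \sum_(l < n)
    tcoef X i j k l *: (delta_mx i j *m delta_mx k l).

Definition tensfunL {n : nat} (phi : 'M[Cx]_n -> Cx) (X : 'M[Cx]_(n * n))
  : 'M[Cx]_n :=
  \sum_(i < n) \sum_(j < n) \sum_(k < n) \sum_(l < n)
    (tcoef X i j k l * phi (delta_mx i j)) *: delta_mx k l.
Definition tensfunR {n : nat} (phi : 'M[Cx]_n -> Cx) (X : 'M[Cx]_(n * n))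
  : 'M[Cx]_n :=
  \sum_(i < n) \sum_(j < n) \sum_(k < n) \sum_(l < n)
    (tcoef X i j k l * phi (delta_mx k l)) *: delta_mx i j.
Definition tensfun2 {n : nat} (phi : 'M[Cx]_n -> Cx) (X : 'M[Cx]_(n * n))
  : Cx :=
  \sum_(i < n) \sum_(j < n) \sum_(k < n) \sum_(l < n)
    tcoef X i j k l * phi (delta_mx i j) * phi (delta_mx k l).

Definition Mtens {n : nat} (M : {vspace 'M[Cx]_n}) : {vspace 'M[Cx]_(n * n)} :=
  <<[seq (vbasis M)`_a *t (vbasis M)`_b
       | a <- iota 0 (\dim M), b <- iota 0 (\dim M)]>>%VS.

Definition trace_on {vT : vectType Cx} (U : {vspace vT}) (f : vT -> vT) : Cx :=
  \sum_(i < \dim U) coord (vbasis U) i (f (vbasis U)`_i).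

Definition eps_s {n : nat} (Delta : 'M[Cx]_n -> 'M[Cx]_(n * n))
  (S : 'M[Cx]_n -> 'M[Cx]_n) (x : 'M[Cx]_n) : 'M[Cx]_n :=
  mult (tensmap S id (Delta x)).

Record weak_Kac {n : nat} (M : {vspace 'M[Cx]_n})
  (Delta : 'M[Cx]_n -> 'M[Cx]_(n * n)) (S : 'M[Cx]_n -> 'M[Cx]_n)
  (eps : 'M[Cx]_n -> Cx) : Prop := {
  M_one : 1%:M \in M;
  M_mul : {in M &, forall x y, x *m y \in M};
  M_adj : {in M, forall x, adj x \in M};
  (* Delta : M -> M (x) M injective, non-necessarily unital *-homomorphism *)
  D_lin : linear Delta;
  D_in : {in M, forall x, Delta x \in Mtens M};
  D_mul : {in M &, forall x y, Delta (x *m y) = Delta x *m Delta y};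
  D_adj : {in M, forall x, Delta (adj x) = adj (Delta x)};
  D_inj : {in M &, injective Delta};
  D_coass : {in M, forall x, tensmap Delta id (Delta x)
                 = castmx (mulnA n n n, mulnA n n n) (tensmap id Delta (Delta x))};
  S_lin : linear S;
  S_in : {in M, forall x, S x \in M};
  S_bij : {in M, forall y, exists2 x, x \in M & S x = y};
  S_one : S 1%:M = 1%:M;
  S_anti : {in M &, forall x y, S (x *m y) = S y *m S x};
  S_adj : {in M, forall x, S (adj x) = adj (S x)};
  S_invol : {in M, forall x, S (S x) = x};
  S_coinv : {in M, forall x, tensmap S S (Delta x) = flip (Delta (S x))};
  e_lin : scalar eps;
  e_counitL : {in M, forall x, tensfunL eps (Delta x) = x};
  e_counitR : {in M, forall x, tensfunR eps (Delta x) = x};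
  e_S : {in M, forall x, eps (S x) = eps x};
  e_adj : {in M, forall x, eps (adj x) = Num.conj (eps x)};
  e_mult : {in M &, forall x y,
     tensfun2 eps ((x *t 1%:M) *m Delta 1%:M *m (1%:M *t y)) = eps (x *m y)};
  e_s : {in M, forall x,
     tensmap (eps_s Delta S) id (Delta x) = (1%:M *t x) *m Delta 1%:M}
}.

Definition in_Nt {n : nat} (M : {vspace 'M[Cx]_n})
  (Delta : 'M[Cx]_n -> 'M[Cx]_(n * n)) (x : 'M[Cx]_n) : Prop :=
  x \in M /\ Delta x = Delta 1%:M *m (x *t 1%:M)
          /\ Delta x = (x *t 1%:M) *m Delta 1%:M.

(* Main.v *)
Require Import Defs.
From HB Require Import structures.
From mathcomp Require Import all_boot all_order all_algebra.
From mathcomp Require Import complex mxtens.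
Import GRing.Theory Num.Theory.
Local Open Scope ring_scope.

Set Implicit Arguments. Unset Strict Implicit. Unset Printing Implicit Defensive.


Definition lin {U V : lmodType Cx} (F : U -> V) :=
  forall (c : Cx) x y, F (c *: x + y) = c *: F x + F y.
Definition linf {U : lmodType Cx} (F : U -> Cx) :=
  forall (c : Cx) x y, F (c *: x + y) = c * F x + F y.

Section LinFacts.
Context {U V : lmodType Cx}.
Lemma lin0 (F : U -> V) : lin F -> F 0 = 0.
Proof. by move=> HF; move: (HF (-1) 0 0); rewrite scaler0 addr0 scaleN1r addNr. Qed.
Lemma linD (F : U -> V) : lin F -> forall x y, F (x + y) = F x + F y.
Proof. by move=> HF x y; move: (HF 1 x y); rewrite !scale1r. Qed.
Lemma linZ (F : U -> V) : lin F -> forall c x, F (c *: x) = c *: F x.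
Proof. by move=> HF c x; rewrite -[c *: x]addr0 HF lin0 // addr0. Qed.
Lemma lin_sum (F : U -> V) (HF : lin F) I r (P : pred I) (G : I -> U) :
  F (\sum_(i <- r | P i) G i) = \sum_(i <- r | P i) F (G i).
Proof. exact: (big_morph F (linD HF) (lin0 HF)). Qed.
Lemma linf0 (F : U -> Cx) : linf F -> F 0 = 0.
Proof. by move=> HF; move: (HF (-1) 0 0); rewrite scaler0 addr0 mulN1r addNr. Qed.
Lemma linfD (F : U -> Cx) : linf F -> forall x y, F (x + y) = F x + F y.
Proof. by move=> HF x y; move: (HF 1 x y); rewrite scale1r mul1r. Qed.
Lemma linfZ (F : U -> Cx) : linf F -> forall c x, F (c *: x) = c * F x.
Proof. by move=> HF c x; rewrite -[c *: x]addr0 HF linf0 // addr0. Qed.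
Lemma linf_sum (F : U -> Cx) (HF : linf F) I r (P : pred I) (G : I -> U) :
  F (\sum_(i <- r | P i) G i) = \sum_(i <- r | P i) F (G i).
Proof. exact: (big_morph F (linfD HF) (linf0 HF)). Qed.
End LinFacts.

Lemma lin_comp {U V W : lmodType Cx} (F : V -> W) (G : U -> V) :
  lin F -> lin G -> lin (fun x => F (G x)).
Proof. by move=> HF HG c x y; rewrite HG HF. Qed.
Lemma linf_comp {U V : lmodType Cx} (F : V -> Cx) (G : U -> V) :
  linf F -> lin G -> linf (fun x => F (G x)).
Proof. by move=> HF HG c x y; rewrite HG HF. Qed.
Lemma lin_id {U : lmodType Cx} : lin (fun x : U => x).
Proof. by []. Qed.
Lemma lin_mull {m p q : nat} (A : 'M[Cx]_(m, p)) : lin (fun X : 'M[Cx]_(p, q) => A *m X).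
Proof. by move=> c x y; rewrite mulmxDr scalemxAr. Qed.
Lemma lin_mulr {m p q : nat} (A : 'M[Cx]_(p, q)) : lin (fun X : 'M[Cx]_(m, p) => X *m A).
Proof. by move=> c x y; rewrite mulmxDl scalemxAl. Qed.

Section Tens.
Variable n : nat.
Local Notation E := (@delta_mx Cx n n).
Local Notation MM := ('M[Cx]_(n * n)).

Lemma tens_suml {m p q r : nat} I rr (P : pred I) (F : I -> 'M[Cx]_(m, p)) (B : 'M[Cx]_(q, r)) :
  (\sum_(i <- rr | P i) F i) *t B = \sum_(i <- rr | P i) (F i *t B).
Proof.
apply: (big_morph (fun A => A *t B)); last exact: tens0mx.
by move=> x y; apply/matrixP => i j; rewrite !mxE mulrDl.
Qed.
Lemma tens_sumr {m p q r : nat} I rr (P : pred I) (F : I -> 'M[Cx]_(q, r)) (A : 'M[Cx]_(m, p)) :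
  A *t (\sum_(i <- rr | P i) F i) = \sum_(i <- rr | P i) (A *t F i).
Proof.
apply: (big_morph (fun B => A *t B)); last exact: tensmx0.
by move=> x y; apply/matrixP => i j; rewrite !mxE mulrDr.
Qed.
Lemma tensZl {m p q r : nat} (c : Cx) (A : 'M[Cx]_(m, p)) (B : 'M[Cx]_(q, r)) :
  (c *: A) *t B = c *: (A *t B).
Proof. by apply/matrixP => i j; rewrite !mxE mulrA. Qed.
Lemma tensZr {m p q r : nat} (c : Cx) (A : 'M[Cx]_(m, p)) (B : 'M[Cx]_(q, r)) :
  A *t (c *: B) = c *: (A *t B).
Proof. by apply/matrixP => i j; rewrite !mxE mulrCA. Qed.

Lemma lin_delta {V : lmodType Cx} (f : 'M[Cx]_n -> V) (a : 'M[Cx]_n) :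
  lin f -> f a = \sum_i \sum_j a i j *: f (E i j).
Proof.
move=> Hf; rewrite {1}[a]matrix_sum_delta (lin_sum Hf); apply: eq_bigr => i _.
by rewrite (lin_sum Hf); apply: eq_bigr => j _; rewrite (linZ Hf).
Qed.
Lemma linf_delta (f : 'M[Cx]_n -> Cx) (a : 'M[Cx]_n) :
  linf f -> f a = \sum_i \sum_j a i j * f (E i j).
Proof.
move=> Hf; rewrite {1}[a]matrix_sum_delta (linf_sum Hf); apply: eq_bigr => i _.
by rewrite (linf_sum Hf); apply: eq_bigr => j _; rewrite (linfZ Hf).
Qed.

Lemma tcoef_tens (a b : 'M[Cx]_n) i j k l : tcoef (a *t b) i j k l = a i j * b k l.
Proof. by rewrite /tcoef tensmxE. Qed.

Lemma S4_lin {V : lmodType Cx} (a : MM -> 'I_n -> 'I_n -> 'I_n -> 'I_n -> Cx)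
  (W : 'I_n -> 'I_n -> 'I_n -> 'I_n -> V) :
  (forall c X Y i j k l, a (c *: X + Y) i j k l = c * a X i j k l + a Y i j k l) ->
  lin (fun X => \sum_i \sum_j \sum_k \sum_l a X i j k l *: W i j k l).
Proof.
move=> Ha c X Y; rewrite scaler_sumr -big_split; apply: eq_bigr => i _.
rewrite scaler_sumr -big_split; apply: eq_bigr => j _.
rewrite scaler_sumr -big_split; apply: eq_bigr => k _.
rewrite scaler_sumr -big_split; apply: eq_bigr => l _.
by rewrite Ha scalerDl scalerA.
Qed.

Lemma tcoef_lin c X Y i j k l :
  tcoef (c *: X + Y : MM) i j k l = c * tcoef X i j k l + tcoef Y i j k l.
Proof. by rewrite /tcoef !mxE. Qed.

End Tens.


Section Tens2.
Variable n : nat.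
Local Notation E := (@delta_mx Cx n n).
Local Notation MM := ('M[Cx]_(n * n)).

Lemma delta_tens (i j k l : 'I_n) :
  E i j *t E k l = delta_mx (mxtens_index (i, k)) (mxtens_index (j, l)) :> MM.
Proof.
apply/matrixP => r s.
case: (mxtens_indexP r) => r1 r2; case: (mxtens_indexP s) => s1 s2.
rewrite tensmxE !mxE (inj_eq (can_inj (@mxtens_indexK n n))).
rewrite (inj_eq (can_inj (@mxtens_indexK n n))) !xpair_eqE.
by case: (r1 == i); case: (s1 == j); case: (r2 == k); case: (s2 == l); rewrite /= ?mulr0 ?mul0r ?mulr1.
Qed.

Lemma sum_idx {V : nmodType} (F : 'I_(n * n) -> V) :
  \sum_(I < n * n) F I = \sum_(i < n) \sum_(k < n) F (mxtens_index (i, k)).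
Proof.
rewrite pair_big /= (reindex (@mxtens_index n n)) /=.
  by apply: eq_bigr => -[i k].
by exists (@mxtens_unindex n n) => x _; [apply: mxtens_indexK | apply: mxtens_unindexK].
Qed.

Lemma kron_decomp (X : MM) :
  X = \sum_i \sum_j \sum_k \sum_l tcoef X i j k l *: (E i j *t E k l).
Proof.
rewrite {1}[X]matrix_sum_delta sum_idx; apply: eq_bigr => i _.
under eq_bigr => k _ do rewrite sum_idx.
rewrite exchange_big /=; apply: eq_bigr => j _.
apply: eq_bigr => k _; apply: eq_bigr => l _.
by rewrite delta_tens.
Qed.

Lemma BP {V : lmodType Cx} (F G : MM -> V) : lin F -> lin G ->
  (forall a b : 'M[Cx]_n, F (a *t b) = G (a *t b)) -> forall X, F X = G X.
Proof.
move=> HF HG H X; rewrite [X]kron_decomp (lin_sum HF) (lin_sum HG).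
apply: eq_bigr => i _; rewrite (lin_sum HF) (lin_sum HG).
apply: eq_bigr => j _; rewrite (lin_sum HF) (lin_sum HG).
apply: eq_bigr => k _; rewrite (lin_sum HF) (lin_sum HG).
by apply: eq_bigr => l _; rewrite (linZ HF) (linZ HG) H.
Qed.

Lemma tensmap_lin {p q : nat} (f : 'M[Cx]_n -> 'M[Cx]_p) (g : 'M[Cx]_n -> 'M[Cx]_q) :
  lin (tensmap f g).
Proof. by apply: S4_lin => *; rewrite tcoef_lin. Qed.
Lemma flip_lin : lin (@flip n).
Proof. by apply: S4_lin => *; rewrite tcoef_lin. Qed.
Lemma mult_lin : lin (@mult n).
Proof. by apply: S4_lin => *; rewrite tcoef_lin. Qed.
Lemma tensfunL_lin phi : lin (@tensfunL n phi).
Proof. by apply: S4_lin => *; rewrite tcoef_lin mulrDl mulrA. Qed.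
Lemma tensfunR_lin phi : lin (@tensfunR n phi).
Proof. by apply: S4_lin => *; rewrite tcoef_lin mulrDl mulrA. Qed.

Lemma tensmap_tens {p q : nat} (f : 'M[Cx]_n -> 'M[Cx]_p) (g : 'M[Cx]_n -> 'M[Cx]_q) a b :
  lin f -> lin g -> tensmap f g (a *t b) = f a *t g b.
Proof.
move=> Hf Hg; rewrite (lin_delta a Hf) (lin_delta b Hg) tens_suml /tensmap.
apply: eq_bigr => i _; rewrite tens_suml; apply: eq_bigr => j _.
rewrite tensZl tens_sumr scaler_sumr; apply: eq_bigr => k _.
rewrite tens_sumr scaler_sumr; apply: eq_bigr => l _.
by rewrite tensZr scalerA tcoef_tens.
Qed.

Lemma flip_tens (a b : 'M[Cx]_n) : flip (a *t b) = b *t a.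
Proof.
rewrite {2}[a]matrix_sum_delta tens_sumr /flip; apply: eq_bigr => i _.
rewrite tens_sumr; apply: eq_bigr => j _.
rewrite {2}[b]matrix_sum_delta tensZr tens_suml scaler_sumr; apply: eq_bigr => k _.
rewrite tens_suml scaler_sumr; apply: eq_bigr => l _.
by rewrite tensZl scalerA tcoef_tens mulrC.
Qed.

Lemma mult_tens (a b : 'M[Cx]_n) : mult (a *t b) = a *m b.
Proof.
rewrite {2}[a]matrix_sum_delta mulmx_suml /mult; apply: eq_bigr => i _.
rewrite mulmx_suml; apply: eq_bigr => j _.
rewrite {2}[b]matrix_sum_delta -scalemxAl mulmx_sumr scaler_sumr; apply: eq_bigr => k _.
rewrite mulmx_sumr scaler_sumr; apply: eq_bigr => l _.
by rewrite -scalemxAr scalerA tcoef_tens.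
Qed.

Lemma tensfunL_tens phi (a b : 'M[Cx]_n) : linf phi -> tensfunL phi (a *t b) = phi a *: b.
Proof.
move=> Hp; rewrite (linf_delta a Hp) scaler_suml /tensfunL; apply: eq_bigr => i _.
rewrite scaler_suml; apply: eq_bigr => j _.
rewrite {2}[b]matrix_sum_delta scaler_sumr; apply: eq_bigr => k _.
rewrite scaler_sumr; apply: eq_bigr => l _.
by rewrite scalerA tcoef_tens mulrAC.
Qed.

Lemma tensfunR_tens psi (a b : 'M[Cx]_n) : linf psi -> tensfunR psi (a *t b) = psi b *: a.
Proof.
move=> Hp; rewrite (linf_delta b Hp) {2}[a]matrix_sum_delta scaler_sumr /tensfunR.
apply: eq_bigr => i _; rewrite scaler_sumr; apply: eq_bigr => j _.
rewrite scaler_suml; apply: eq_bigr => k _.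
rewrite scaler_suml; apply: eq_bigr => l _.
by rewrite scalerA tcoef_tens; congr (_ *: _); rewrite [RHS]mulrC mulrA.
Qed.

End Tens2.


Section Tens3.
Variable n : nat.
Local Notation E := (@delta_mx Cx n n).
Local Notation MM := ('M[Cx]_(n * n)).
Local Notation Mn := ('M[Cx]_n).

Lemma tensmap_comp (f g f' g' : Mn -> Mn) X : lin f -> lin g -> lin f' -> lin g' ->
  tensmap f g (tensmap f' g' X) = tensmap (fun w => f (f' w)) (fun w => g (g' w)) X.
Proof.
move=> Hf Hg Hf' Hg'; move: X; apply: BP.
- exact: lin_comp (tensmap_lin _ _) (tensmap_lin _ _).
- exact: tensmap_lin.
by move=> a b; rewrite !tensmap_tens //; [exact: lin_comp | exact: lin_comp].
Qed.

Lemma flip_map (f g : Mn -> Mn) X : lin f -> lin g ->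
  flip (tensmap f g X) = tensmap g f (flip X).
Proof.
move=> Hf Hg; move: X; apply: BP.
- exact: lin_comp (@flip_lin n) (tensmap_lin _ _).
- exact: lin_comp (tensmap_lin _ _) (@flip_lin n).
by move=> a b; rewrite tensmap_tens // !flip_tens tensmap_tens.
Qed.

Lemma flipK (X : MM) : flip (flip X) = X.
Proof.
move: X; apply: BP; first exact: lin_comp (@flip_lin n) (@flip_lin n).
  exact: lin_id.
by move=> a b; rewrite !flip_tens.
Qed.

Lemma flip_mul (X Y : MM) : flip (X *m Y) = flip X *m flip Y.
Proof.
move: X; apply: BP.
- exact: lin_comp (@flip_lin n) (lin_mulr _).
- exact: lin_comp (lin_mulr _) (@flip_lin n).
move=> a b; move: Y; apply: BP.
- exact: lin_comp (@flip_lin n) (lin_mull _).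
- exact: lin_comp (lin_mull _) (@flip_lin n).
by move=> c d; rewrite tensmx_mul !flip_tens tensmx_mul.
Qed.

Lemma TR_map psi (f g : Mn -> Mn) X : linf psi -> lin f -> lin g ->
  tensfunR psi (tensmap f g X) = f (tensfunR (fun w => psi (g w)) X).
Proof.
move=> Hp Hf Hg; move: X; apply: BP.
- by apply: lin_comp; [apply: tensfunR_lin | apply: tensmap_lin].
- by apply: (lin_comp Hf); apply: tensfunR_lin.
move=> a b; rewrite tensmap_tens // !tensfunR_tens //; last exact: linf_comp.
by rewrite (linZ Hf).
Qed.

Lemma TL_flip phi X : linf phi -> tensfunL phi X = tensfunR phi (@flip n X).
Proof.
move=> Hp; move: X; apply: BP.
- exact: tensfunL_lin.
- by apply: lin_comp; [apply: tensfunR_lin | apply: flip_lin].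
by move=> a b; rewrite flip_tens tensfunL_tens // tensfunR_tens.
Qed.

Lemma TR_left psi (z : Mn) X : linf psi ->
  tensfunR psi ((1%:M *t z) *m X) = tensfunR (fun w => psi (z *m w)) X.
Proof.
have Hz : linf (fun w => psi (z *m w)) -> True by [].
move=> Hp; have Hpz : linf (fun w => psi (z *m w)) by exact: linf_comp Hp (lin_mull z).
move: X; apply: BP.
- by apply: lin_comp; [apply: tensfunR_lin | apply: lin_mull].
- exact: tensfunR_lin.
by move=> a b; rewrite tensmx_mul mul1mx !tensfunR_tens.
Qed.

Lemma mult_left (a : Mn) (X : MM) : mult ((a *t 1%:M) *m X) = a *m mult X.
Proof.
move: X; apply: BP.
- exact: lin_comp (@mult_lin n) (lin_mull _).
- exact: lin_comp (lin_mull _) (@mult_lin n).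
by move=> b c; rewrite tensmx_mul mul1mx !mult_tens mulmxA.
Qed.

Lemma coordf_linf (i j : 'I_n) : linf (fun w : Mn => w i j).
Proof. by move=> c x y; rewrite !mxE. Qed.

Definition Ql (X : MM) (i j : 'I_n) : Mn := tensfunL (fun w => w i j) X.

Lemma TL_Q phi X : linf phi -> tensfunL phi X = \sum_i \sum_j phi (E i j) *: Ql X i j.
Proof.
move=> Hp; move: X; apply: BP.
- exact: tensfunL_lin.
- move=> c X Y; rewrite scaler_sumr -big_split; apply: eq_bigr => i _.
  rewrite scaler_sumr -big_split; apply: eq_bigr => j _.
  by rewrite /Ql (tensfunL_lin _ c X Y) scalerDr !scalerA mulrC.
move=> a b; rewrite tensfunL_tens // (linf_delta a Hp) scaler_suml; apply: eq_bigr => i _.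
rewrite scaler_suml; apply: eq_bigr => j _.
by rewrite /Ql tensfunL_tens ?scalerA 1?mulrC //; exact: coordf_linf.
Qed.

Lemma tmat_lin i j : lin (fun X : MM => \matrix_(k, l) tcoef X i j k l : Mn).
Proof. by move=> c X Y; apply/matrixP => k l; rewrite !mxE /tcoef !mxE. Qed.

Lemma Ql_mat (X : MM) i j : Ql X i j = \matrix_(k, l) tcoef X i j k l.
Proof.
have H1 := tensfunL_lin (fun w : Mn => w i j).
have H2 := tmat_lin i j.
move: X; apply: (BP H1 H2).
move=> a b; rewrite tensfunL_tens; last exact: coordf_linf.
change (a i j *: b = (\matrix_(k, l) tcoef (a *t b) i j k l : 'M[Cx]_n)); apply/matrixP => k l; by rewrite !mxE tcoef_tens.
Qed.

Lemma sumQ_mult (g : Mn -> Mn) (X : MM) : lin g ->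
  \sum_i \sum_j Ql X i j *m g (E i j) = mult (flip (tensmap g (fun w => w) X)).
Proof.
move=> Hg; move: X; apply: BP.
- move=> c X Y; rewrite scaler_sumr -big_split; apply: eq_bigr => i _.
  rewrite scaler_sumr -big_split; apply: eq_bigr => j _.
  by rewrite /Ql (tensfunL_lin _ c X Y) mulmxDl scalemxAl.
- exact: lin_comp (@mult_lin n) (lin_comp (@flip_lin n) (tensmap_lin _ _)).
move=> a b; rewrite tensmap_tens // flip_tens mult_tens (lin_delta a Hg) mulmx_sumr.
apply: eq_bigr => i _; rewrite mulmx_sumr; apply: eq_bigr => j _.
rewrite /Ql tensfunL_tens; last exact: coordf_linf.
by rewrite -scalemxAl scalemxAr.
Qed.

Lemma tens11 : (1%:M : Mn) *t (1%:M : Mn) = 1%:M :> MM.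
Proof.
apply/matrixP => r s.
case: (mxtens_indexP r) => r1 r2; case: (mxtens_indexP s) => s1 s2.
rewrite tensmxE !mxE (inj_eq (can_inj (@mxtens_indexK n n))) xpair_eqE.
by case: (r1 == s1); case: (r2 == s2); rewrite /= ?mulr0 ?mul0r ?mulr1.
Qed.

End Tens3.


Lemma adj_mul {m p q : nat} (A : 'M[Cx]_(m, p)) (B : 'M[Cx]_(p, q)) :
  adj (A *m B) = adj B *m adj A.
Proof. by rewrite /adj map_mxM trmx_mul. Qed.

Lemma adj_tens {m p q r : nat} (A : 'M[Cx]_(m, p)) (B : 'M[Cx]_(q, r)) :
  adj (A *t B) = adj A *t adj B.
Proof. by rewrite /adj map_mxT trmx_tens. Qed.

Lemma adjC1 {m : nat} : adj (1%:M : 'M[Cx]_m) = 1%:M.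
Proof. by rewrite /adj map_mx1 trmx1. Qed.

Section Tens4.
Variable n : nat.
Local Notation E := (@delta_mx Cx n n).
Local Notation MM := ('M[Cx]_(n * n)).
Local Notation Mn := ('M[Cx]_n).

Lemma Ql_adj (X : MM) i j : Ql (adj X) i j = adj (Ql X j i).
Proof. by rewrite !Ql_mat; apply/matrixP => k l; rewrite /adj !mxE /tcoef !mxE. Qed.

Definition rsl {m : nat} (psi : Mn -> Cx) (Y : 'M[Cx]_(m * n)) : 'M[Cx]_m :=
  \matrix_(r, s) \sum_k \sum_l psi (E k l) * Y (mxtens_index (r, k)) (mxtens_index (s, l)).

Lemma rsl_lin {m : nat} psi : lin (@rsl m psi).
Proof.
move=> c X Y; apply/matrixP => r s; rewrite !mxE mulr_sumr -big_split.
apply: eq_bigr => k _; rewrite mulr_sumr -big_split; apply: eq_bigr => l _.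
by rewrite !mxE mulrDr mulrCA.
Qed.

Lemma rsl_tens {m : nat} psi (A : 'M[Cx]_m) (B : Mn) : linf psi ->
  rsl psi (A *t B) = psi B *: A.
Proof.
move=> Hp; apply/matrixP => r s; rewrite !mxE (linf_delta B Hp) mulr_suml.
apply: eq_bigr => k _; rewrite mulr_suml; apply: eq_bigr => l _.
by rewrite tensmxE mulrCA [RHS]mulrC [in RHS](mulrC (B k l)).
Qed.

Lemma tensA (a b c : Mn) :
  castmx (mulnA n n n, mulnA n n n) (a *t (b *t c)) = (a *t b) *t c.
Proof.
apply/matrixP => I J.
case: (mxtens_indexP I) => I1 i3; case: (mxtens_indexP J) => J1 j3.
case: (mxtens_indexP I1) => i1 i2; case: (mxtens_indexP J1) => j1 j2.
rewrite castmxE !tensmxE.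
have cE : forall (x y z : 'I_n), cast_ord (esym (mulnA n n n, mulnA n n n).1) (mxtens_index (mxtens_index (x, y), z))
   = mxtens_index (x, mxtens_index (y, z)).
  by move=> x y z; apply: val_inj => /=; rewrite mulnDl -mulnA addnA.
have cE2 : forall (x y z : 'I_n), cast_ord (esym (mulnA n n n, mulnA n n n).2) (mxtens_index (mxtens_index (x, y), z))
   = mxtens_index (x, mxtens_index (y, z)).
  by move=> x y z; apply: val_inj => /=; rewrite mulnDl -mulnA addnA.
by rewrite cE cE2 !tensmxE mulrA.
Qed.

Lemma castA_lin : lin (castmx (mulnA n n n, mulnA n n n) : 'M[Cx]_(n * (n * n)) -> 'M[Cx]_(n * n * n)).
Proof. by move=> c X Y; apply/matrixP => i j; rewrite !castmxE !mxE !castmxE. Qed.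

Lemma tensr_lin {m p q r : nat} (a : 'M[Cx]_(m, p)) : lin (fun W : 'M[Cx]_(q, r) => a *t W).
Proof. by move=> c X Y; apply/matrixP => i j; rewrite !mxE mulrDr mulrCA. Qed.

Lemma rsl_cast_tens psi (a : Mn) (W : MM) : linf psi ->
  rsl psi (castmx (mulnA n n n, mulnA n n n) (a *t W)) = a *t tensfunR psi W.
Proof.
move=> Hp.
have HF : lin (fun W : MM => rsl psi (castmx (mulnA n n n, mulnA n n n) (a *t W))).
  move=> c X Y /=; by rewrite (tensr_lin a c X Y) castA_lin rsl_lin.
have HG : lin (fun W : MM => a *t tensfunR psi W).
  move=> c X Y /=; by rewrite (tensfunR_lin psi c X Y) tensr_lin.
move: W; apply: (BP HF HG).
by move=> b c; rewrite tensA rsl_tens // tensfunR_tens // tensZr.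
Qed.

Lemma SC_left (Delta : Mn -> MM) psi X : lin Delta -> linf psi ->
  rsl psi (tensmap Delta (fun w => w) X) = Delta (tensfunR psi X).
Proof.
move=> HD Hp.
have HF : lin (fun X : MM => rsl psi (tensmap Delta (fun w => w) X)).
  by move=> c Y Z /=; rewrite tensmap_lin rsl_lin.
have HG : lin (fun X : MM => Delta (tensfunR psi X)).
  by move=> c Y Z /=; rewrite tensfunR_lin HD.
move: X; apply: (BP HF HG).
by move=> a b; rewrite tensmap_tens // rsl_tens // tensfunR_tens // (linZ HD).
Qed.

Lemma SC_right (Delta : Mn -> MM) psi X : lin Delta -> linf psi ->
  rsl psi (castmx (mulnA n n n, mulnA n n n) (tensmap (fun w => w) Delta X))
  = tensmap (fun w => w) (fun w => tensfunR psi (Delta w)) X.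
Proof.
move=> HD Hp.
have HF : lin (fun X : MM => rsl psi (castmx (mulnA n n n, mulnA n n n) (tensmap (fun w => w) Delta X))).
  by move=> c Y Z /=; rewrite tensmap_lin castA_lin rsl_lin.
have HG := tensmap_lin (fun w : Mn => w) (fun w => tensfunR psi (Delta w)).
move: X; apply: (BP HF HG).
move=> a b; rewrite tensmap_tens // rsl_cast_tens // tensmap_tens //.
by move=> c Y Z /=; rewrite HD tensfunR_lin.
Qed.

End Tens4.


Section Main.
Variables (n : nat) (M : {vspace 'M[Cx]_n}) (Delta : 'M[Cx]_n -> 'M[Cx]_(n * n))
  (S : 'M[Cx]_n -> 'M[Cx]_n) (eps : 'M[Cx]_n -> Cx).
Hypothesis H : weak_Kac M Delta S eps.
Local Notation E := (@delta_mx Cx n n).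
Local Notation MM := ('M[Cx]_(n * n)).
Local Notation Mn := ('M[Cx]_n).

Lemma HD : lin Delta. Proof. by move=> c x y; exact: (D_lin H c x y). Qed.
Lemma HS : lin S. Proof. by move=> c x y; exact: (S_lin H c x y). Qed.
Lemma He : linf eps. Proof. by move=> c x y; exact: (e_lin H c x y). Qed.


Lemma Mone : 1%:M \in M. Proof. exact: (M_one H). Qed.
Lemma Mmul x y : x \in M -> y \in M -> x *m y \in M. Proof. exact: (M_mul H). Qed.
Lemma Din x : x \in M -> Delta x \in Mtens M. Proof. exact: (D_in H). Qed.
Lemma Dmul x y : x \in M -> y \in M -> Delta (x *m y) = Delta x *m Delta y.
Proof. exact: (D_mul H). Qed.
Lemma Dadj x : x \in M -> Delta (adj x) = adj (Delta x). Proof. exact: (D_adj H). Qed.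
Lemma Dcoass x : x \in M -> tensmap Delta id (Delta x)
   = castmx (mulnA n n n, mulnA n n n) (tensmap id Delta (Delta x)).
Proof. exact: (D_coass H). Qed.
Lemma Sin x : x \in M -> S x \in M. Proof. exact: (S_in H). Qed.
Lemma Santi x y : x \in M -> y \in M -> S (x *m y) = S y *m S x. Proof. exact: (S_anti H). Qed.
Lemma Sinvol x : x \in M -> S (S x) = x. Proof. exact: (S_invol H). Qed.
Lemma Scoinv x : x \in M -> tensmap S S (Delta x) = flip (Delta (S x)). Proof. exact: (S_coinv H). Qed.
Lemma counitR x : x \in M -> tensfunR eps (Delta x) = x. Proof. exact: (e_counitR H). Qed.
Lemma esax x : x \in M -> tensmap (eps_s Delta S) id (Delta x) = (1%:M *t x) *m Delta 1%:M.
Proof. exact: (e_s H). Qed.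

Lemma Mtens_ind (P : MM -> Prop) : P 0 -> (forall X Y, P X -> P Y -> P (X + Y)) ->
  (forall c X, P X -> P (c *: X)) ->
  (forall a b, a \in M -> b \in M -> P (a *t b)) -> forall X, X \in Mtens M -> P X.
Proof.
move=> P0 PD PZ Pab X; rewrite /Mtens => /(@coord_span _ _ _ (in_tuple _)) ->.
apply: big_ind => // i _; apply: PZ.
have : (in_tuple [seq (vbasis M)`_a *t (vbasis M)`_b
       | a <- iota 0 (\dim M), b <- iota 0 (\dim M)])`_i \in
       [seq (vbasis M)`_a *t (vbasis M)`_b | a <- iota 0 (\dim M), b <- iota 0 (\dim M)].
  by apply: mem_nth.
case/allpairsP => -[a b] /= [Ha Hb ->].
rewrite !mem_iota /= in Ha Hb.
by apply: Pab; apply: vbasis_mem; apply: mem_nth; rewrite size_tuple.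
Qed.

Lemma AM {V : lmodType Cx} (F G : MM -> V) : lin F -> lin G ->
  (forall a b, a \in M -> b \in M -> F (a *t b) = G (a *t b)) ->
  forall X, X \in Mtens M -> F X = G X.
Proof.
move=> HF HG Hab; apply: Mtens_ind => //.
- by rewrite !lin0.
- by move=> X Y HX HY; rewrite !linD // HX HY.
- by move=> c X HX; rewrite !linZ // HX.
Qed.

Lemma sliceR_in psi X : linf psi -> X \in Mtens M -> tensfunR psi X \in M.
Proof.
move=> Hp; move: X; apply: Mtens_ind.
- by rewrite lin0 ?mem0v //; exact: tensfunR_lin.
- by move=> X1 Y HX HY; rewrite linD ?memvD //; exact: tensfunR_lin.
- by move=> c X1 HX; rewrite linZ ?memvZ //; exact: tensfunR_lin.
by move=> a b Ha Hb; rewrite tensfunR_tens // memvZ.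
Qed.

Lemma sliceL_in phi X : linf phi -> X \in Mtens M -> tensfunL phi X \in M.
Proof.
move=> Hp; move: X; apply: Mtens_ind.
- by rewrite lin0 ?mem0v //; exact: tensfunL_lin.
- by move=> X1 Y HX HY; rewrite linD ?memvD //; exact: tensfunL_lin.
- by move=> c X1 HX; rewrite linZ ?memvZ //; exact: tensfunL_lin.
by move=> a b Ha Hb; rewrite tensfunL_tens // memvZ.
Qed.

Local Notation e := (Delta 1%:M).
Local Notation es := (eps_s Delta S).

Lemma e_in : e \in Mtens M. Proof. exact: Din Mone. Qed.

Lemma es_lin : lin es.
Proof. by move=> c x y; rewrite /eps_s HD tensmap_lin mult_lin. Qed.

Lemma es_e : tensmap es id e = e.
Proof. by rewrite (esax Mone) tens11 mul1mx. Qed.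

Lemma es1 : es 1%:M = 1%:M.
Proof.
have := congr1 (tensfunR eps) es_e.
rewrite TR_map; [|exact: He|exact: es_lin|exact: lin_id].
by rewrite (_ : (fun w => eps (id w)) = eps) // (counitR Mone).
Qed.

Lemma es_formula z : z \in M -> es z = tensfunR (fun w => eps (z *m w)) e.
Proof.
move=> Hz; have := congr1 (tensfunR eps) (esax Hz).
rewrite TR_map; [|exact: He|exact: es_lin|exact: lin_id].
rewrite (_ : (fun w => eps (id w)) = eps) // (counitR Hz) => ->.
by rewrite TR_left //; exact: He.
Qed.


Lemma L_Sr z X : z \in M -> X \in Mtens M ->
  tensmap S id (X *m (z *t 1%:M)) = (S z *t 1%:M) *m tensmap S id X.
Proof.
move=> Hz; move: X; apply: AM.
- by move=> c X Y /=; rewrite mulmxDl -scalemxAl tensmap_lin.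
- by move=> c X Y /=; rewrite tensmap_lin mulmxDr -scalemxAr.
move=> a b Ha Hb; rewrite tensmx_mul mulmx1 !tensmap_tens; [|exact: HS|exact: lin_id|exact: HS|exact: lin_id].
by rewrite tensmx_mul mul1mx Santi.
Qed.

Lemma es_Nt z : z \in M -> Delta z = e *m (z *t 1%:M) -> es z = S z.
Proof.
move=> Hz Dz; rewrite {1}/eps_s Dz L_Sr //; last exact: e_in.
by rewrite mult_left -/(eps_s Delta S 1%:M) es1 mulmx1.
Qed.

Lemma flip_e : flip e = tensmap S S e.
Proof. by rewrite (Scoinv Mone) (S_one H). Qed.

Lemma phiz_linf z : linf (fun w => eps (z *m S w)).
Proof. by move=> c x y /=; rewrite HS mulmxDr -scalemxAr He. Qed.

Lemma Bkey z : z \in M -> Delta z = e *m (z *t 1%:M) ->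
  tensfunL (fun w => eps (z *m S w)) e = z.
Proof.
move=> Hz Dz; rewrite TL_flip; last exact: phiz_linf.
rewrite flip_e TR_map; [|exact: phiz_linf|exact: HS|exact: HS].
have -> : tensfunR (fun w => eps (z *m S (S w))) e = tensfunR (fun w => eps (z *m w)) e.
  move: e_in; apply: AM; [exact: tensfunR_lin|exact: tensfunR_lin|].
  move=> a b Ha Hb; rewrite !tensfunR_tens ?Sinvol //.
    by move=> c x y /=; rewrite mulmxDr -scalemxAr He.
  by move=> c x y /=; rewrite !HS mulmxDr -scalemxAr He.
by rewrite -es_formula // es_Nt // Sinvol.
Qed.

Lemma flipSid : flip (tensmap S id e) = tensmap S id e.
Proof.
have E1 : tensmap S id e = tensmap id S (flip e).
  rewrite flip_e tensmap_comp; [|exact: lin_id|exact: HS|exact: HS|exact: HS].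
  move: e_in; apply: AM; [exact: tensmap_lin|exact: tensmap_lin|].
  move=> a b Ha Hb; rewrite !tensmap_tens ?Sinvol //; try exact: HS; try exact: lin_id.
  by move=> c x y /=; rewrite !HS.
rewrite [in LHS]E1 flip_map; [|exact: lin_id|exact: HS]. by rewrite flipK.
Qed.

Lemma sumQS : \sum_i \sum_j Ql e i j *m S (E i j) = 1%:M.
Proof.
rewrite sumQ_mult; last exact: HS.
by rewrite flipSid -/(eps_s Delta S 1%:M) es1.
Qed.


Lemma L_SS P X : P \in M -> X \in Mtens M ->
  tensmap S S ((1%:M *t P) *m X) = tensmap S S X *m (1%:M *t S P).
Proof.
move=> HP; move: X; apply: AM.
- by move=> c X Y /=; rewrite mulmxDr -scalemxAr tensmap_lin.
- by move=> c X Y /=; rewrite tensmap_lin mulmxDl -scalemxAl.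
move=> a b Ha Hb; rewrite tensmx_mul mul1mx !tensmap_tens; [|exact: HS|exact: HS|exact: HS|exact: HS].
by rewrite tensmx_mul mulmx1 Santi.
Qed.

Lemma DP psi : linf psi ->
  Delta (tensfunR psi e) = (1%:M *t tensfunR psi e) *m e.
Proof.
move=> Hp; have HP : tensfunR psi e \in M by apply: sliceR_in => //; exact: e_in.
have HG : lin (fun w => tensfunR psi (Delta w)).
  by move=> c x y /=; rewrite HD tensfunR_lin.
have SC : Delta (tensfunR psi e) = tensmap id (fun w => tensfunR psi (Delta w)) e.
  rewrite -SC_left; [|exact: HD|exact: Hp].
  by rewrite (Dcoass Mone) SC_right //; exact: HD.
have E2 : tensmap es id (Delta (tensfunR psi e)) = Delta (tensfunR psi e).
  rewrite SC; transitivity (tensmap id (fun w => tensfunR psi (Delta w)) (tensmap es id e)).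
    rewrite !tensmap_comp //; try exact: lin_id; exact: es_lin.
  by rewrite es_e.
by rewrite -{1}E2 esax.
Qed.

Lemma Q_S i j : Ql e i j = S (tensfunR (fun w => S w i j) e).
Proof.
rewrite /Ql TL_flip; last exact: coordf_linf.
rewrite flip_e TR_map //; [exact: coordf_linf|exact: HS|exact: HS].
Qed.

Lemma psiS_linf i j : linf (fun w => S w i j).
Proof. by move=> c x y /=; rewrite HS !mxE. Qed.

Lemma NtL i j : Delta (Ql e i j) = e *m (Ql e i j *t 1%:M).
Proof.
rewrite Q_S; set P := tensfunR _ e.
have HP : P \in M by apply: sliceR_in; [exact: psiS_linf|exact: e_in].
have -> : Delta (S P) = flip (tensmap S S (Delta P)) by rewrite Scoinv // flipK.
rewrite DP; last exact: psiS_linf.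
by rewrite L_SS //; [rewrite -flip_e flip_mul flipK flip_tens | exact: e_in].
Qed.

Lemma adj_e : adj e = e.
Proof. by rewrite -(Dadj Mone) adjC1. Qed.

Lemma Q_adj i j : Ql e i j = adj (Ql e j i).
Proof. by rewrite -Ql_adj adj_e. Qed.

Lemma Q_in i j : Ql e i j \in M.
Proof. by apply: sliceL_in; [exact: coordf_linf|exact: e_in]. Qed.

Lemma NtR i j : Delta (Ql e i j) = (Ql e i j *t 1%:M) *m e.
Proof.
by rewrite {1}Q_adj Dadj ?Q_in // NtL adj_mul adj_tens adjC1 -Q_adj adj_e.
Qed.

Lemma Nt_mul x y : in_Nt M Delta x -> in_Nt M Delta y -> in_Nt M Delta (x *m y).
Proof.
move=> [Hx [Dx1 Dx2]] [Hy [Dy1 Dy2]]; split; first exact: Mmul.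
rewrite Dmul //; split.
- by rewrite Dy1 mulmxA -Dmul ?Mone // mulmx1 Dx1 -mulmxA tensmx_mul mulmx1.
- by rewrite Dx2 -mulmxA -Dmul ?Mone // mul1mx Dy2 mulmxA tensmx_mul mulmx1.
Qed.

End Main.

Unset Implicit Arguments.

Theorem proposition2p1p10 (n : nat) (M : {vspace 'M[Cx]_n})
  (Delta : 'M[Cx]_n -> 'M[Cx]_(n * n)) (S : 'M[Cx]_n -> 'M[Cx]_n)
  (eps : 'M[Cx]_n -> Cx) :
  weak_Kac M Delta S eps ->
  forall Nt : {vspace 'M[Cx]_n},
  (forall y, y \in Nt <-> in_Nt M Delta y) ->
  forall x, x \in Nt -> eps x = trace_on Nt (fun y => x *m y).
Proof.
move=> H Nt HNt x Hx.
have HxN := (HNt x).1 Hx.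
have Hv : forall t : 'I_(\dim Nt), (vbasis Nt)`_t \in Nt.
  by move=> t; apply: vbasis_mem; apply: mem_nth; rewrite size_tuple.
have Hc : forall t : 'I_(\dim Nt), linf (coord (vbasis Nt) t).
  by move=> t c u v; exact: coord_is_scalar.
have HQ : forall i j, Ql (Delta 1%:M) i j \in Nt.
  by move=> i j; apply/HNt; split; [exact: (Q_in H) | split; [exact: (NtL H) | exact: (NtR H)]].
have He' := He H.
rewrite /trace_on.
transitivity (\sum_(t < \dim Nt) \sum_i \sum_j
   eps (x *m (vbasis Nt)`_t *m S (delta_mx i j)) * coord (vbasis Nt) t (Ql (Delta 1%:M) i j)); last first.
  apply: eq_bigr => t _.
  have [HzM [Dz1 _]] := Nt_mul H HxN ((HNt _).1 (Hv t)).
  rewrite -[in RHS](Bkey H HzM Dz1) (TL_Q _ (phiz_linf H _)) (linf_sum (Hc t)).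
  apply: eq_bigr => i _; rewrite (linf_sum (Hc t)); apply: eq_bigr => j _.
  by rewrite (linfZ (Hc t)).
have inner : forall i j, \sum_(t < \dim Nt) eps (x *m (vbasis Nt)`_t *m S (delta_mx i j))
     * coord (vbasis Nt) t (Ql (Delta 1%:M) i j)
   = eps (x *m Ql (Delta 1%:M) i j *m S (delta_mx i j)).
  move=> i j.
  have Hpsi : linf (fun w => eps (x *m w *m S (delta_mx i j))).
    by move=> c u v /=; rewrite mulmxDr mulmxDl -scalemxAr -scalemxAl He'.
  rewrite [in RHS](coord_vbasis (HQ i j)) (linf_sum Hpsi); apply: eq_bigr => t _.
  by rewrite (linfZ Hpsi) mulrC.
rewrite exchange_big.
transitivity (\sum_i \sum_j eps (x *m Ql (Delta 1%:M) i j *m S (delta_mx i j))); last first.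
  under [RHS]eq_bigr => i _ do rewrite exchange_big.
  apply: eq_bigr => i _; apply: eq_bigr => j _.
  by rewrite inner.
have Hchi : linf (fun w => eps (x *m w)).
  by move=> c u v /=; rewrite mulmxDr -scalemxAr He'.
rewrite -[in LHS](mulmx1 x) -[in LHS](sumQS H) (linf_sum Hchi); apply: eq_bigr => i _.
rewrite (linf_sum Hchi); apply: eq_bigr => j _.
by rewrite mulmxA.
Qed.
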